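(* Let $S=\{s_1,\dots,s_{k_1}\}$ and $T=\{t_1,\dots,t_{k_2}\}$ be nonempty sets of positive integers and $d=\gcd\{s+t: s\in S,t\in T\}$. Then there exist integers $a_1,\dots,a_{k_1},b_1,\dots,b_{k_2}$ such that $$d=\sum_{i=1}^{k_1}a_is_i-\sum_{i=1}^{k_2}b_it_i\quad\text{and}\quad\sum_{i=1}^{k_1}a_i+\sum_{i=1}^{k_2}b_i=0.$$ *)

(* Defs.v *)
From mathcomp Require Import all_boot all_order all_algebra.
Set Implicit Arguments. Unset Strict Implicit. Unset Printing Implicit Defensive.
Import Order.TTheory GRing.Theory Num.Theory.

Definition gcd_sums (k1 k2 : nat) (s : 'I_k1 -> nat) (t : 'I_k2 -> nat) : nat :=
  \big[gcdn/0]_(i < k1) \big[gcdn/0]_(j < k2) (s i + t j).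

(* Main.v *)
Require Import Defs.
From mathcomp Require Import all_boot all_order all_algebra.
From mathcomp Require Import ring.
Import Order.TTheory GRing.Theory Num.Theory.
Local Open Scope ring_scope.

Definition Pset (k1 k2 : nat) (s : 'I_k1 -> nat) (t : 'I_k2 -> nat) (x : int) :=
  exists (a : 'I_k1 -> int) (b : 'I_k2 -> int),
    x = \sum_(i < k1) a i * (s i)%:Z - \sum_(j < k2) b j * (t j)%:Z
    /\ \sum_(i < k1) a i + \sum_(j < k2) b j = 0.

Lemma Pset0 k1 k2 s t : @Pset k1 k2 s t 0.
Proof.
exists (fun _ => 0), (fun _ => 0); rewrite !big1 ?subr0 ?addr0 //= => i _;
  by rewrite ?mul0r.
Qed.

Lemma Pset_lin k1 k2 s t (u v x y : int) :
  @Pset k1 k2 s t x -> @Pset k1 k2 s t y -> @Pset k1 k2 s t (u * x + v * y).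
Proof.
move=> [a1 [b1 [-> E1]]] [a2 [b2 [-> E2]]].
exists (fun i => u * a1 i + v * a2 i), (fun j => u * b1 j + v * b2 j); split.
  have -> : \sum_i (u * a1 i + v * a2 i) * (s i)%:Z =
     u * \sum_i a1 i * (s i)%:Z + v * \sum_i a2 i * (s i)%:Z.
    rewrite (eq_bigr (fun i => u * (a1 i * (s i)%:Z) + v * (a2 i * (s i)%:Z))) => [|i _]; last by ring.
    by rewrite big_split /= -!mulr_sumr.
  have -> : \sum_j (u * b1 j + v * b2 j) * (t j)%:Z =
     u * \sum_j b1 j * (t j)%:Z + v * \sum_j b2 j * (t j)%:Z.
    rewrite (eq_bigr (fun j => u * (b1 j * (t j)%:Z) + v * (b2 j * (t j)%:Z))) => [|j _]; last by ring.
    by rewrite big_split /= -!mulr_sumr.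
  ring.
rewrite !big_split /= -!mulr_sumr.
have -> : u * (\sum_i a1 i) + v * (\sum_i a2 i) + (u * (\sum_j b1 j) + v * (\sum_j b2 j))
  = u * (\sum_i a1 i + \sum_j b1 j) + v * (\sum_i a2 i + \sum_j b2 j) by ring.
by rewrite E1 E2 !mulr0 addr0.
Qed.

Lemma sum_delta n (i : 'I_n) (f : 'I_n -> int) :
  \sum_(i' < n) ((i' == i)%:R : int) * f i' = f i.
Proof.
rewrite (bigD1 i) //= eqxx mul1r big1 ?addr0 // => k /negbTE ->; by rewrite mul0r.
Qed.

Lemma sum_delta1 n (i : 'I_n) :
  \sum_(i' < n) ((i' == i)%:R : int) = 1.
Proof.
rewrite (bigD1 i) //= eqxx big1 ?addr0 // => k /negbTE ->; by [].
Qed.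

Lemma Pset_gen k1 k2 s t i j : @Pset k1 k2 s t ((s i + t j)%N)%:Z.
Proof.
exists (fun i' => ((i' == i)%:R : int)), (fun j' => - ((j' == j)%:R : int)).
rewrite sum_delta sumrN sum_delta1.
under eq_bigr do rewrite mulNr.
by rewrite sumrN sum_delta PoszD sum_delta1 opprK subrr.
Qed.

Theorem lemma4p1 (k1 k2 : nat) (s : 'I_k1 -> nat) (t : 'I_k2 -> nat) :
  (0 < k1)%N -> (0 < k2)%N ->
  injective s -> injective t ->
  (forall i, (0 < s i)%N) -> (forall j, (0 < t j)%N) ->
  exists (a : 'I_k1 -> int) (b : 'I_k2 -> int),
    (gcd_sums s t)%:Z = \sum_(i < k1) a i * (s i)%:Z - \sum_(j < k2) b j * (t j)%:Z
    /\ \sum_(i < k1) a i + \sum_(j < k2) b j = 0.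
Proof.
move=> _ _ _ _ _ _.
have H : forall m n : nat, Pset _ _ s t m%:Z -> Pset _ _ s t n%:Z -> Pset _ _ s t (gcdn m n)%:Z.
  move=> m n Hm Hn; have [u [v e]] := Bezoutz m n.
  have -> : (gcdn m n)%:Z = gcdz m n by [].
  by rewrite -e; apply: Pset_lin.
rewrite /gcd_sums.
apply: (big_ind (fun n : nat => Pset _ _ s t n%:Z)); first exact: Pset0.
  exact: H.
move=> i _; apply: (big_ind (fun n : nat => Pset _ _ s t n%:Z)); first exact: Pset0.
  exact: H.
move=> j _; exact: Pset_gen.
Qed.
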